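(* Let $A$ be a system with state space $\Omega_A$ that supports uniform universal steering, with steering partner system $B$ (state space $\Omega_B$) and composite state space $\Omega_A\otimes\Omega_B$ as in the context. Let $$\lambda_{\rm opt}=\inf_{e,f\in\mathscr{E}(\Omega_A)}\lambda_{e,f}.$$ Then the (generalised) Tsirelson bound, i.e. the supremum of the Bell functional $$\mathbb{B}=\omega\big(A_1\otimes B_1+A_1\otimes B_2+A_2\otimes B_1-A_2\otimes B_2\big)$$ over all states $\omega\in\Omega_A\otimes\Omega_B$ and all dichotomic ($\pm1$-valued) observables $\mathsf{A}_1,\mathsf{A}_2$ on $\Omega_A$ and $\mathsf{B}_1,\mathsf{B}_2$ on $\Omega_B$, is given by the tight inequality $$\mathbb{B}\le\frac{2}{\lambda_{\rm opt}},$$ which can be saturated.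
   Context: General probabilistic models: a state space $\Omega$ is a compact convex subset of a finite-dimensional real vector space $V$. $A(\Omega)$ denotes the ordered linear space of affine functionals on $\Omega$ with the pointwise order ($f\ge 0$ iff $f(\omega)\ge0$ for all $\omega\in\Omega$) and order unit $u$ ($u(\omega)=1$ for all $\omega$). The effects are $\mathscr{E}(\Omega)=\{e\in A(\Omega): 0\le e(\omega)\le 1\ \forall\omega\in\Omega\}$. A discrete observable is a map $\mathsf{O}$ from a finite outcome set into $\mathscr{E}(\Omega)$ with $\sum_x\mathsf{O}[x]=u$. A dichotomic observable $\mathsf{O}$ with outcomes $\pm1$ is determined by the effect $e=\mathsf{O}[+1]$, with $\mathsf{O}[-1]=e'=u-e$; its associated functional is $O=\mathsf{O}[+1]-\mathsf{O}[-1]$. The cone $V_+$ is generated by $\Omega$ and $V^*$, $V^*_+$ denote the dual space and dual cone. Joint measurability: effects $e,f$ are jointly measurable if there exists $g\in A(\Omega)$ with $0\le g$, $g\le e$, $g\le f$, $e+f\le g+u$. Smearing: for $\lambda\in[0,1]$, $e^{(\lambda)}=\lambda e+\frac{1-\lambda}{2}u$. For effects $e,f$, $\lambda_{e,f}$ is the maximum of $\lambda\in[0,1]$ such that $e^{(\lambda)}$ and $f^{(\lambda)}$ are jointly measurable (i.e. there is $g\in A(\Omega)$ with $g\le e^{(\lambda)}$, $g\le f^{(\lambda)}$, $0\le g$, $e^{(\lambda)}+f^{(\lambda)}-u\le g$). Composite systems: the state space of a composite of systems with state spaces $\Omega_1\subset V_1$, $\Omega_2\subset V_2$ is $\Omega_1\otimes\Omega_2=\{\omega\in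 (V_1\otimes V_2)_+ : (u_1\otimes u_2)(\omega)=1\}$, where the cone $(V_1\otimes V_2)_+$ is any cone lying between the minimal cone $\{\sum_{i,j}\lambda_{ij}v_1^{(i)}\otimes v_2^{(j)}:\lambda_{ij}\ge0,\ v_k^{(i)}\in(V_k)_+\}$ and the maximal cone $(V_1^*\otimes_{min}V_2^* )_+^*$. For $a\in V_1^*$, $b\in V_2^*$ write $\omega(a,b)=(a\otimes b)(\omega)$, extended bilinearly. Each bipartite state $\omega$ defines the linear map $\hat\omega:V_2^*\to V_1$ by $a(\hat\omega(b))=\omega(a,b)$. The $A$-marginal of $\omega\in\Omega_A\otimes\Omega_B$ is $\omega^A=\hat\omega(u_B)\in\Omega_A$. Steering: a state $\omega\in\Omega_A\otimes\Omega_B$ is steering for its $A$-marginal if for every finite collection $\alpha_1,\dots,\alpha_n\in(V_A)_+$ with $0\le u_A(\alpha_i)\le1$ and $\sum_i\alpha_i=\omega^A$, there exists an observable $\{e_1,\dots,e_n\}\subset\mathscr{E}(\Omega_B)$ (with $\sum_i e_i=u_B$) such that $\alpha_i=\hat\omega(e_i)$ for all $i$. A system $A$ supports uniform universal steering if there exist a system $B$ with state space $\Omega_B$ and a composite state space $\Omega_A\otimes\Omega_B$ such that for every $\alpha\in\Omega_A$ there is a state $\omega_\alpha\in\Omega_A\otimes\Omega_B$ with $\omega_\alpha^A=\alpha$ that is steering for its $A$-marginal. *)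

(* Defs.v *)
From HB Require Import structures.
From mathcomp Require Import all_boot all_order all_algebra.
From mathcomp Require Import all_classical all_reals all_analysis.
Set Implicit Arguments. Unset Strict Implicit. Unset Printing Implicit Defensive.
Import Order.TTheory GRing.Theory Num.Theory.
Import numFieldNormedType.Exports.
Local Open Scope classical_set_scope.
Local Open Scope ring_scope.

(** Finite-dimensional real vector space V = R^n : vectors are 'rV[R]_n.
    Linear functionals (elements of V^* ) are also represented by 'rV[R]_n,
    acting through the dot product [dot a x]. *)
Section GPT.
Variable R : realType.

Definition dot n (a x : 'rV[R]_n) : R := \sum_(i < n) a 0 i * x 0 i.

Definition is_state_space n (Om : set 'rV[R]_n) (u : 'rV[R]_n) : Prop :=
  [/\ Om !=set0,
      (forall x y t, Om x -> Om y -> 0 <= t <= 1 -> Om (t *: x + (1 - t) *: y)),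
      compact Om &
      (forall w, Om w -> dot u w = 1)].

Definition effect n (Om : set 'rV[R]_n) (u e : 'rV[R]_n) : Prop :=
  forall w, Om w -> 0 <= dot e w <= dot u w.

Definition jointly_measurable n (Om : set 'rV[R]_n) (u e f : 'rV[R]_n) : Prop :=
  exists g : 'rV[R]_n, forall w, Om w ->
    [/\ 0 <= dot g w, dot g w <= dot e w, dot g w <= dot f w &
        dot e w + dot f w <= dot g w + dot u w].

Definition smear n (u : 'rV[R]_n) (l : R) (e : 'rV[R]_n) : 'rV[R]_n :=
  l *: e + ((1 - l) / 2) *: u.

Definition lambda_ef n (Om : set 'rV[R]_n) (u e f : 'rV[R]_n) : R :=
  sup [set l : R | 0 <= l <= 1 /\
       jointly_measurable Om u (smear u l e) (smear u l f)].

Definition lambda_opt n (Om : set 'rV[R]_n) (u : 'rV[R]_n) : R :=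
  inf [set l : R | exists e f, [/\ effect Om u e, effect Om u f &
                                    l = lambda_ef Om u e f]].

(** cone V_+ generated by Omega (Omega convex: its rays) *)
Definition pos_cone n (Om : set 'rV[R]_n) : set 'rV[R]_n :=
  [set v | exists t, exists2 w, 0 <= t /\ Om w & v = t *: w].

Definition dual_cone n (Om : set 'rV[R]_n) : set 'rV[R]_n :=
  [set a | forall v, pos_cone Om v -> 0 <= dot a v].

(** V_1 (x) V_2 is represented by 'M[R]_(n1, n2). *)
Definition tens n1 n2 (x : 'rV[R]_n1) (y : 'rV[R]_n2) : 'M[R]_(n1, n2) :=
  \matrix_(i, j) (x 0 i * y 0 j).

(** (a (x) b)(w) = w(a,b) *)
Definition pair2 n1 n2 (w : 'M[R]_(n1, n2)) (a : 'rV[R]_n1) (b : 'rV[R]_n2) : R :=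
  \sum_(i < n1) \sum_(j < n2) a 0 i * w i j * b 0 j.

Definition mdot n1 n2 (phi w : 'M[R]_(n1, n2)) : R :=
  \sum_(i < n1) \sum_(j < n2) phi i j * w i j.

Definition min_tensor n1 n2 (C1 : set 'rV[R]_n1) (C2 : set 'rV[R]_n2)
  : set 'M[R]_(n1, n2) :=
  [set w | exists k (x : 'I_k -> 'rV[R]_n1) (y : 'I_k -> 'rV[R]_n2),
     [/\ forall i, C1 (x i), forall i, C2 (y i) &
         w = \sum_(i < k) tens (x i) (y i)]].

Definition min_cone n1 n2 (Om1 : set 'rV[R]_n1) (Om2 : set 'rV[R]_n2) :=
  min_tensor (pos_cone Om1) (pos_cone Om2).

Definition max_cone n1 n2 (Om1 : set 'rV[R]_n1) (Om2 : set 'rV[R]_n2)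
  : set 'M[R]_(n1, n2) :=
  [set w | forall phi, min_tensor (dual_cone Om1) (dual_cone Om2) phi ->
           0 <= mdot phi w].

Definition composite_cone n1 n2 (Om1 : set 'rV[R]_n1) (Om2 : set 'rV[R]_n2)
  (K : set 'M[R]_(n1, n2)) : Prop :=
  [/\ (forall v w, K v -> K w -> K (v + w)),
      (forall t w, 0 <= t -> K w -> K (t *: w)),
      min_cone Om1 Om2 `<=` K & K `<=` max_cone Om1 Om2].

Definition composite_states n1 n2 (K : set 'M[R]_(n1, n2))
  (u1 : 'rV[R]_n1) (u2 : 'rV[R]_n2) : set 'M[R]_(n1, n2) :=
  [set w | K w /\ pair2 w u1 u2 = 1].

(** \hat w : V_2^* -> V_1, a(\hat w(b)) = w(a,b) *)
Definition hatw n1 n2 (w : 'M[R]_(n1, n2)) (b : 'rV[R]_n2) : 'rV[R]_n1 :=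
  \row_i \sum_(j < n2) w i j * b 0 j.

Definition marginalA n1 n2 (w : 'M[R]_(n1, n2)) (u2 : 'rV[R]_n2) : 'rV[R]_n1 :=
  hatw w u2.

Definition steering n1 n2 (OmA : set 'rV[R]_n1) (uA : 'rV[R]_n1)
  (OmB : set 'rV[R]_n2) (uB : 'rV[R]_n2) (w : 'M[R]_(n1, n2)) : Prop :=
  forall k (al : 'I_k -> 'rV[R]_n1),
    (forall i, pos_cone OmA (al i)) ->
    (forall i, 0 <= dot uA (al i) <= 1) ->
    \sum_(i < k) al i = marginalA w uB ->
    exists e : 'I_k -> 'rV[R]_n2,
      [/\ forall i, effect OmB uB (e i),
          (forall v, OmB v -> \sum_(i < k) dot (e i) v = dot uB v) &
          forall i, al i = hatw w (e i)].

Definition uniform_universal_steering_with n1 n2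
  (OmA : set 'rV[R]_n1) (uA : 'rV[R]_n1) (OmB : set 'rV[R]_n2) (uB : 'rV[R]_n2)
  (K : set 'M[R]_(n1, n2)) : Prop :=
  forall al, OmA al -> exists w, composite_states K uA uB w /\
     marginalA w uB = al /\ steering OmA uA OmB uB w.

(** dichotomic observable with effect e: O = e - (u - e) *)
Definition dich n (u e : 'rV[R]_n) : 'rV[R]_n := e - (u - e).

Definition bell n1 n2 (uA : 'rV[R]_n1) (uB : 'rV[R]_n2) (w : 'M[R]_(n1, n2))
  (a1 a2 : 'rV[R]_n1) (b1 b2 : 'rV[R]_n2) : R :=
  let A1 := dich uA a1 in let A2 := dich uA a2 in
  let B1 := dich uB b1 in let B2 := dich uB b2 in
  pair2 w A1 B1 + pair2 w A1 B2 + pair2 w A2 B1 - pair2 w A2 B2.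

End GPT.

(* Main.v *)
Require Import Defs.
From HB Require Import structures.
From mathcomp Require Import all_boot all_order all_algebra.
From mathcomp Require Import all_classical all_reals all_analysis.
From mathcomp Require Import ring lra.
Import Order.TTheory GRing.Theory Num.Theory.
Import numFieldNormedType.Exports.
Local Open Scope classical_set_scope.
Local Open Scope ring_scope.
Set Implicit Arguments. Unset Strict Implicit.

Section Basics.
Variable R : realType.

Lemma dotDl n (a b x : 'rV[R]_n) : dot (a + b) x = dot a x + dot b x.
Proof. by rewrite /dot -big_split; apply: eq_bigr => i _; rewrite mxE mulrDl. Qed.
Lemma dotDr n (a x y : 'rV[R]_n) : dot a (x + y) = dot a x + dot a y.
Proof. by rewrite /dot -big_split; apply: eq_bigr => i _; rewrite mxE mulrDr. Qed.
Lemma dotZl n k (a x : 'rV[R]_n) : dot (k *: a) x = k * dot a x.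
Proof. by rewrite /dot mulr_sumr; apply: eq_bigr => i _; rewrite mxE mulrA. Qed.
Lemma dotZr n k (a x : 'rV[R]_n) : dot a (k *: x) = k * dot a x.
Proof. by rewrite /dot mulr_sumr; apply: eq_bigr => i _; rewrite mxE mulrCA. Qed.
Lemma dotNl n (a x : 'rV[R]_n) : dot (- a) x = - dot a x.
Proof. by rewrite -scaleN1r dotZl mulN1r. Qed.
Lemma dotNr n (a x : 'rV[R]_n) : dot a (- x) = - dot a x.
Proof. by rewrite -scaleN1r dotZr mulN1r. Qed.
Lemma dotBl n (a b x : 'rV[R]_n) : dot (a - b) x = dot a x - dot b x.
Proof. by rewrite dotDl dotNl. Qed.
Lemma dotBr n (a x y : 'rV[R]_n) : dot a (x - y) = dot a x - dot a y.
Proof. by rewrite dotDr dotNr. Qed.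
Lemma dot0l n (x : 'rV[R]_n) : dot 0 x = 0.
Proof. by rewrite -(scale0r 0) dotZl mul0r. Qed.
Lemma dot0r n (x : 'rV[R]_n) : dot x 0 = 0.
Proof. by rewrite -(scale0r 0) dotZr mul0r. Qed.
Lemma dotC n (a x : 'rV[R]_n) : dot a x = dot x a.
Proof. by rewrite /dot; apply: eq_bigr => i _; rewrite mulrC. Qed.
Lemma dot_ge0 n (x : 'rV[R]_n) : 0 <= dot x x.
Proof. by rewrite /dot; apply: sumr_ge0 => i _; rewrite -expr2 sqr_ge0. Qed.
Lemma dot_eq0 n (x : 'rV[R]_n) : dot x x = 0 -> x = 0.
Proof.
move=> /eqP; rewrite /dot psumr_eq0; last by move=> i _; rewrite -expr2 sqr_ge0.
move=> /allP H; apply/rowP => j; rewrite mxE.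
have := H j (mem_index_enum j); rewrite -expr2 sqrf_eq0 => /implyP.
by move=> /(_ isT)/eqP.
Qed.

Lemma hatwD n1 n2 (w : 'M[R]_(n1,n2)) b c : hatw w (b + c) = hatw w b + hatw w c.
Proof. by apply/rowP => i; rewrite !mxE -big_split; apply: eq_bigr => j _; rewrite mxE mulrDr. Qed.
Lemma hatwZ n1 n2 (w : 'M[R]_(n1,n2)) k b : hatw w (k *: b) = k *: hatw w b.
Proof. by apply/rowP => i; rewrite !mxE mulr_sumr; apply: eq_bigr => j _; rewrite mxE mulrCA. Qed.
Lemma hatwN n1 n2 (w : 'M[R]_(n1,n2)) b : hatw w (- b) = - hatw w b.
Proof. by rewrite -scaleN1r hatwZ scaleN1r. Qed.
Lemma hatwB n1 n2 (w : 'M[R]_(n1,n2)) b c : hatw w (b - c) = hatw w b - hatw w c.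
Proof. by rewrite hatwD hatwN. Qed.

Lemma pair2_dot n1 n2 (w : 'M[R]_(n1,n2)) a b : pair2 w a b = dot a (hatw w b).
Proof.
rewrite /pair2 /dot; apply: eq_bigr => i _; rewrite mxE mulr_sumr.
by apply: eq_bigr => j _; rewrite mulrA.
Qed.

Lemma mdot_tens n1 n2 (w : 'M[R]_(n1,n2)) a b : mdot (tens a b) w = pair2 w a b.
Proof.
rewrite /pair2 /mdot; apply: eq_bigr => i _; apply: eq_bigr => j _.
by rewrite mxE; ring.
Qed.


Lemma cone_add n (Om : set 'rV[R]_n) u t1 t2 w1 w2 : is_state_space Om u ->
  0 <= t1 -> 0 <= t2 -> Om w1 -> Om w2 ->
  exists2 w, Om w & t1 *: w1 + t2 *: w2 = (t1 + t2) *: w.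
Proof.
move=> [_ conv _ _] h1 h2 o1 o2.
have [T0|TP] := eqVneq (t1 + t2) 0.
  have z1 : t1 = 0 by lra.
  have z2 : t2 = 0 by lra.
  by exists w1 => //; rewrite T0 z1 z2 !scale0r addr0.
have hT : 0 < t1 + t2 by rewrite lt_def TP /= addr_ge0.
exists ((t1 / (t1 + t2)) *: w1 + (1 - t1 / (t1 + t2)) *: w2).
  apply: conv => //; apply/andP; split; first by rewrite divr_ge0 // addr_ge0.
  by rewrite ler_pdivrMr // mul1r lerDl.
rewrite scalerDr !scalerA; congr (_ *: _ + _ *: _).
  by rewrite mulrCA divff ?mulr1.
by rewrite mulrBr mulr1 mulrCA divff ?mulr1 // addrC addKr.
Qed.

Lemma pos_coneD n (Om : set 'rV[R]_n) u v1 v2 : is_state_space Om u ->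
  pos_cone Om v1 -> pos_cone Om v2 -> pos_cone Om (v1 + v2).
Proof.
move=> S [t1 [w1 [h1 o1] ->]] [t2 [w2 [h2 o2] ->]].
have [w ow ->] := cone_add S h1 h2 o1 o2.
by exists (t1 + t2), w => //; split => //; rewrite addr_ge0.
Qed.

Lemma pos_coneZ n (Om : set 'rV[R]_n) k v : 0 <= k ->
  pos_cone Om v -> pos_cone Om (k *: v).
Proof.
move=> hk [t [w [h o] ->]]; exists (k * t), w; last by rewrite scalerA.
by split => //; rewrite mulr_ge0.
Qed.

Lemma pos_cone_u n (Om : set 'rV[R]_n) u v : is_state_space Om u ->
  pos_cone Om v -> 0 <= dot u v.
Proof.
by move=> [_ _ _ hu] [t [w [h o] ->]]; rewrite dotZr hu // mulr1.
Qed.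

Lemma pos_cone_u0 n (Om : set 'rV[R]_n) u v : is_state_space Om u ->
  pos_cone Om v -> dot u v = 0 -> v = 0.
Proof.
by move=> [_ _ _ hu] [t [w [h o] ->]]; rewrite dotZr hu // mulr1 => ->; rewrite scale0r.
Qed.

Lemma dualP n (Om : set 'rV[R]_n) a : (forall w, Om w -> 0 <= dot a w) ->
  dual_cone Om a.
Proof. by move=> H v [t [w [h o] ->]]; rewrite dotZr mulr_ge0 // H. Qed.

Lemma pair2_ge0 n1 n2 (Om1 : set 'rV[R]_n1) (Om2 : set 'rV[R]_n2) K w a b :
  composite_cone Om1 Om2 K -> K w -> dual_cone Om1 a -> dual_cone Om2 b ->
  0 <= pair2 w a b.
Proof.
move=> [_ _ _ Kmax] Kw da db; rewrite -mdot_tens; apply: (Kmax _ Kw).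
exists 1%N, (fun=> a), (fun=> b); split => //.
by rewrite big_ord1.
Qed.


Lemma dich_smear n (u e : 'rV[R]_n) l : dich u (smear u l e) = l *: dich u e.
Proof.
apply/rowP => i; rewrite /dich /smear !mxE.
by field.
Qed.

Lemma bell_smear n1 n2 (uA : 'rV[R]_n1) (uB : 'rV[R]_n2) w a1 a2 b1 b2 l :
  bell uA uB w (smear uA l a1) (smear uA l a2) b1 b2 =
  l * bell uA uB w a1 a2 b1 b2.
Proof.
rewrite /bell /= !dich_smear !pair2_dot !dotZl; ring.
Qed.

Lemma bell_JM n1 n2 (OmA : set 'rV[R]_n1) uA (OmB : set 'rV[R]_n2) uB K w e f b1 b2 :
  composite_cone OmA OmB K -> composite_states K uA uB w ->
  effect OmB uB b1 -> effect OmB uB b2 ->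
  jointly_measurable OmA uA e f -> bell uA uB w e f b1 b2 <= 2.
Proof.
move=> KC [Kw w1] eb1 eb2 [g H].
have dg : dual_cone OmA g by apply: dualP => v /H [].
have de : dual_cone OmA (e - g) by apply: dualP => v /H [] *; rewrite dotBl subr_ge0.
have df : dual_cone OmA (f - g) by apply: dualP => v /H [] *; rewrite dotBl subr_ge0.
have d4 : dual_cone OmA (uA - e - f + g).
  by apply: dualP => v /H [] *; rewrite dotDl !dotBl; lra.
have db1 : dual_cone OmB b1 by apply: dualP => v /eb1 /andP[].
have db2 : dual_cone OmB b2 by apply: dualP => v /eb2 /andP[].
have db1' : dual_cone OmB (uB - b1).
  by apply: dualP => v /eb1 /andP[] *; rewrite dotBl subr_ge0.
have db2' : dual_cone OmB (uB - b2).
  by apply: dualP => v /eb2 /andP[] *; rewrite dotBl subr_ge0.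
have P1 := pair2_ge0 KC Kw dg db1'.
have P2 := pair2_ge0 KC Kw de db2'.
have P3 := pair2_ge0 KC Kw df db2.
have P4 := pair2_ge0 KC Kw d4 db1.
move: P1 P2 P3 P4 w1; rewrite /bell /dich /= !pair2_dot.
do 3 rewrite ?hatwD ?hatwN ?dotDl ?dotNl ?dotDr ?dotNr.
lra.
Qed.

Ltac dsimp := do 4 rewrite ?hatwD ?hatwN ?hatwZ ?dotDl ?dotNl ?dotDr ?dotNr ?dotZl ?dotZr.


Definition admS n (Om : set 'rV[R]_n) u e f :=
  [set l : R | 0 <= l <= 1 /\ jointly_measurable Om u (smear u l e) (smear u l f)].

Lemma admS_ub n (Om : set 'rV[R]_n) u e f : has_ubound (admS Om u e f).
Proof. by exists 1 => l [/andP[]]. Qed.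

Lemma half_adm n (Om : set 'rV[R]_n) u e f : is_state_space Om u ->
  effect Om u e -> effect Om u f -> admS Om u e f (1/2).
Proof.
move=> [_ _ _ hu] he hf; split; first by apply/andP; split; lra.
exists ((1/4) *: (e + f)) => w ow.
move: (he w ow) (hf w ow) (hu w ow); rewrite /smear.
do 4 rewrite ?hatwD ?hatwN ?hatwZ ?dotDl ?dotNl ?dotDr ?dotNr ?dotZl ?dotZr.
move=> /andP[h1 h2] /andP[h3 h4] hw; rewrite hw in h2 h4 *.
split; lra.
Qed.

Lemma lam_ef_ge n (Om : set 'rV[R]_n) u e f : is_state_space Om u ->
  effect Om u e -> effect Om u f -> 1/2 <= lambda_ef Om u e f.
Proof.
move=> S he hf; exact: (ub_le_sup (admS_ub Om u e f) (half_adm S he hf)).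
Qed.

Lemma lam_ef_le1 n (Om : set 'rV[R]_n) u e f : is_state_space Om u ->
  effect Om u e -> effect Om u f -> lambda_ef Om u e f <= 1.
Proof.
move=> S he hf; apply: ge_sup; first by exists (1/2); exact: half_adm.
by move=> l [/andP[]].
Qed.

Lemma effect0 n (Om : set 'rV[R]_n) u : is_state_space Om u -> effect Om u 0.
Proof. by move=> [_ _ _ hu] w ow; rewrite dot0l hu // lexx ler01. Qed.

Lemma effectu n (Om : set 'rV[R]_n) u : is_state_space Om u -> effect Om u u.
Proof. by move=> [_ _ _ hu] w ow; rewrite hu // lexx ler01. Qed.

Definition optS n (Om : set 'rV[R]_n) u :=
  [set l : R | exists e f, [/\ effect Om u e, effect Om u f & l = lambda_ef Om u e f]].

Lemma optS_lb n (Om : set 'rV[R]_n) u : is_state_space Om u ->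
  lbound (optS Om u) (1/2).
Proof. by move=> S l [e [f [he hf ->]]]; exact: lam_ef_ge. Qed.

Lemma lam_opt_ge n (Om : set 'rV[R]_n) u : is_state_space Om u ->
  1/2 <= lambda_opt Om u.
Proof.
move=> S; apply: lb_le_inf; last exact: optS_lb.
by exists (lambda_ef Om u 0 0), 0, 0; split => //; exact: effect0.
Qed.

Lemma lam_opt_le n (Om : set 'rV[R]_n) u e f : is_state_space Om u ->
  effect Om u e -> effect Om u f -> lambda_opt Om u <= lambda_ef Om u e f.
Proof.
move=> S he hf; apply: (ge_inf (ex_intro _ _ (optS_lb S))).
by exists e, f.
Qed.

Lemma upper n1 n2 (OmA : set 'rV[R]_n1) uA (OmB : set 'rV[R]_n2) uB K w a1 a2 b1 b2 :
  is_state_space OmA uA -> composite_cone OmA OmB K -> composite_states K uA uB w ->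
  effect OmA uA a1 -> effect OmA uA a2 ->
  effect OmB uB b1 -> effect OmB uB b2 ->
  bell uA uB w a1 a2 b1 b2 <= 2 / lambda_opt OmA uA.
Proof.
move=> SA KC cw ha1 ha2 hb1 hb2.
have lo := lam_opt_ge SA.
have lo0 : 0 < lambda_opt OmA uA by lra.
set b := bell uA uB w a1 a2 b1 b2.
have [b0|bp] := lerP b 0.
  by apply: le_trans b0 _; rewrite divr_ge0 //; lra.
have lef : lambda_ef OmA uA a1 a2 <= 2 / b.
  apply: ge_sup; first by exists (1/2); exact: half_adm.
  move=> l [/andP[l0 l1] jm].
  have := bell_JM KC cw hb1 hb2 jm; rewrite bell_smear -/b => h.
  by rewrite ler_pdivlMr.
have := le_trans (lam_opt_le SA ha1 ha2) lef.
rewrite ler_pdivlMr // => h.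
by rewrite ler_pdivlMr // mulrC.
Qed.

End Basics.

Section T.
Variable R : realType.
Variable n : nat.
Local Notation T := (R * 'rV[R]_n)%type.

Lemma fst_cont (A B : topologicalType) : continuous (@fst A B).
Proof. by move=> x; exact: cvg_fst. Qed.
Lemma snd_cont (A B : topologicalType) : continuous (@snd A B).
Proof. by move=> x; exact: cvg_snd. Qed.

Lemma pt_cont : continuous (fun x : T => x.1 *: x.2).
Proof.
move=> x; apply: continuousZ; [exact: fst_cont | exact: snd_cont].
Qed.

Lemma cont_sum (X : topologicalType) k (F : 'I_k -> X -> R) x :
  (forall i, {for x, continuous (F i)}) -> {for x, continuous (fun y => \sum_(i < k) F i y)}.
Proof.
elim: k F => [|k IH] F HF.
  have -> : (fun y => \sum_(i < 0) F i y) = (fun=> 0) by apply/funext => y; rewrite big_ord0.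
  exact: cst_continuous.
have -> : (fun y => \sum_(i < k.+1) F i y) = (fun y => \sum_(i < k) F (widen_ord (leqnSn k) i) y + F ord_max y).
  by apply/funext => y; rewrite big_ord_recr.
apply: continuousD; last exact: HF.
by apply: (IH (fun i => F (widen_ord (leqnSn k) i))) => i; exact: HF.
Qed.

Lemma cont_dot (X : topologicalType) (f g : X -> 'rV[R]_n) x :
  {for x, continuous f} -> {for x, continuous g} ->
  {for x, continuous (fun y => dot (f y) (g y))}.
Proof.
move=> hf hg; rewrite /dot; apply: cont_sum => j.
apply: continuousM.
  apply: (@continuous_comp _ _ _ f (fun M : 'rV[R]_n => M 0 j)) => //.
  exact: coord_continuous.
apply: (@continuous_comp _ _ _ g (fun M : 'rV[R]_n => M 0 j)) => //.
exact: coord_continuous.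
Qed.

End T.

Section Sep.
Variable R : realType.

Lemma var_ineq (A B : R) : 0 <= B ->
  (forall s, 0 < s -> s <= 1 -> 0 <= 2 * s * A + s ^+ 2 * B) -> 0 <= A.
Proof.
move=> B0 H; rewrite leNgt; apply/negP => A0.
have BA : 0 < B - A by lra.
pose s := - A / (B - A).
have s0 : 0 < s by rewrite /s divr_gt0 //; lra.
have sBA : s * (B - A) = - A by rewrite /s divfK // gt_eqF.
have s1 : s <= 1.
  by rewrite /s ler_pdivrMr // mul1r; lra.
have := H s s0 s1.
have -> : 2 * s * A + s ^+ 2 * B = s * (A * (1 + s)).
  have -> : s ^+ 2 * B = s * (s * B) by rewrite expr2 mulrA.
  have -> : s * B = - A + s * A by rewrite -sBA; ring.
  ring.
rewrite pmulr_rge0 // => h.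
have : 0 < 1 + s by lra.
move=> h1; have : A * (1 + s) < 0 by rewrite pmulr_llt0.
lra.
Qed.


Ltac dsimp := do 4 rewrite ?hatwD ?hatwN ?hatwZ ?dotDl ?dotNl ?dotDr ?dotNr ?dotZl ?dotZr ?dot0l ?dot0r.

Variables (n : nat) (Om : set 'rV[R]_n) (u a b : 'rV[R]_n) (c : R).

Definition V4 (p1 p2 p3 p4 : 'rV[R]_n) := dot a p2 + dot b p3 - dot (a + b - u) p4.
Definition L4 (p1 p2 p3 p4 : 'rV[R]_n) := p1 - p2 - p3 + p4.

Local Notation TT := (R * 'rV[R]_n)%type.
Local Notation X := ((TT * TT) * (TT * TT))%type.
Let pt (x : TT) : 'rV[R]_n := x.1 *: x.2.
Let Ld (d : X) := L4 (pt d.1.1) (pt d.1.2) (pt d.2.1) (pt d.2.2).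
Let Vd (d : X) := V4 (pt d.1.1) (pt d.1.2) (pt d.2.1) (pt d.2.2).
Let F (d : X) := dot (Ld d) (Ld d) + (Vd d + c) * (Vd d + c).
Let S := (`[0, 1]%classic : set R) `*` Om.
Let D := (S `*` S) `*` (S `*` S).

Lemma contD' (Y : topologicalType) (f g : Y -> 'rV[R]_n) x :
  {for x, continuous f} -> {for x, continuous g} -> {for x, continuous (fun y => f y + g y)}.
Proof. exact: continuousD. Qed.
Lemma contB' (Y : topologicalType) (f g : Y -> 'rV[R]_n) x :
  {for x, continuous f} -> {for x, continuous g} -> {for x, continuous (fun y => f y - g y)}.
Proof. exact: continuousB. Qed.
Lemma contDr (Y : topologicalType) (f g : Y -> R) x :
  {for x, continuous f} -> {for x, continuous g} -> {for x, continuous (fun y => f y + g y)}.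
Proof. exact: continuousD. Qed.
Lemma contBr (Y : topologicalType) (f g : Y -> R) x :
  {for x, continuous f} -> {for x, continuous g} -> {for x, continuous (fun y => f y - g y)}.
Proof. exact: continuousB. Qed.
Lemma contMr (Y : topologicalType) (f g : Y -> R) x :
  {for x, continuous f} -> {for x, continuous g} -> {for x, continuous (fun y => f y * g y)}.
Proof. exact: continuousM. Qed.

Lemma pt_contX (f : X -> TT) : continuous f -> continuous (fun d => pt (f d)).
Proof.
move=> hf d; apply: (@continuous_comp _ _ _ f pt); [exact: hf | exact: pt_cont].
Qed.

Lemma pP11 : continuous (fun d : X => pt d.1.1).
Proof.
apply: (pt_contX (f := fun d : X => d.1.1)) => x.
by apply: (@continuous_comp _ _ _ fst fst); apply: fst_cont.
Qed.
Lemma pP12 : continuous (fun d : X => pt d.1.2).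
Proof.
apply: (pt_contX (f := fun d : X => d.1.2)) => x.
by apply: (@continuous_comp _ _ _ fst snd); [apply: fst_cont|apply: snd_cont].
Qed.
Lemma pP21 : continuous (fun d : X => pt d.2.1).
Proof.
apply: (pt_contX (f := fun d : X => d.2.1)) => x.
by apply: (@continuous_comp _ _ _ snd fst); [apply: snd_cont|apply: fst_cont].
Qed.
Lemma pP22 : continuous (fun d : X => pt d.2.2).
Proof.
apply: (pt_contX (f := fun d : X => d.2.2)) => x.
by apply: (@continuous_comp _ _ _ snd snd); apply: snd_cont.
Qed.

Lemma Ld_cont : continuous Ld.
Proof.
move=> d; rewrite /Ld /L4.
apply: (@contD' X (fun y => pt y.1.1 - pt y.1.2 - pt y.2.1) (fun y => pt y.2.2)); last exact: pP22.
apply: (@contB' X (fun y => pt y.1.1 - pt y.1.2) (fun y => pt y.2.1)); last exact: pP21.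
apply: (@contB' X (fun y => pt y.1.1) (fun y => pt y.1.2)); [exact: pP11 | exact: pP12].
Qed.

Lemma Vd_cont : continuous Vd.
Proof.
move=> d; rewrite /Vd /V4.
apply: (@contBr X (fun y => dot a (pt y.1.2) + dot b (pt y.2.1)) (fun y => dot (a + b - u) (pt y.2.2))).
  apply: (@contDr X (fun y => dot a (pt y.1.2)) (fun y => dot b (pt y.2.1))).
    apply: (@cont_dot R n X (fun=> a)); [exact: cst_continuous | exact: pP12].
  apply: (@cont_dot R n X (fun=> b)); [exact: cst_continuous | exact: pP21].
apply: (@cont_dot R n X (fun=> a + b - u)); [exact: cst_continuous | exact: pP22].
Qed.

Lemma F_cont : continuous F.
Proof.
move=> d; rewrite /F.
apply: (@contDr X (fun y => dot (Ld y) (Ld y)) (fun y => (Vd y + c) * (Vd y + c))).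
  by apply: cont_dot; apply: Ld_cont.
apply: (@contMr X (fun y => Vd y + c) (fun y => Vd y + c));
  apply: (@contDr X Vd (fun=> c)); try exact: Vd_cont; exact: cst_continuous.
Qed.

Lemma D_compact : is_state_space Om u -> compact D.
Proof.
move=> [_ _ cO _].
have cS : compact S by apply: compact_setX => //; exact: segment_compact.
by apply: compact_setX; apply: compact_setX.
Qed.


Lemma SP x : S x <-> (0 <= x.1 <= 1 /\ Om x.2).
Proof. by rewrite /S /setX /= in_itv. Qed.

Lemma comb x y s : is_state_space Om u -> S x -> S y -> 0 <= s <= 1 ->
  exists2 z, S z & pt z = (1 - s) *: pt x + s *: pt y.
Proof.
move=> SS /SP [/andP[x0 x1] ox] /SP [/andP[y0 y1] oy] /andP[s0 s1].
have h1 : 0 <= (1 - s) * x.1 by rewrite mulr_ge0 // subr_ge0.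
have h2 : 0 <= s * y.1 by rewrite mulr_ge0.
have [w ow E] := cone_add SS h1 h2 ox oy.
exists ((1 - s) * x.1 + s * y.1, w); last by rewrite /pt /= !scalerA E.
apply/SP; split => //=; apply/andP; split; first by rewrite addr_ge0.
have : s * y.1 <= s by rewrite ler_piMr.
have : (1 - s) * x.1 <= 1 - s by rewrite ler_piMr // subr_ge0.
lra.
Qed.

Lemma D_comb d1 d2 s : is_state_space Om u -> D d1 -> D d2 -> 0 <= s <= 1 ->
  exists2 d, D d & [/\ Ld d = (1 - s) *: Ld d1 + s *: Ld d2 &
                      Vd d = (1 - s) * Vd d1 + s * Vd d2].
Proof.
move=> SS [[a1 a2] [a3 a4]] [[b1 b2] [b3 b4]] hs.
have [z1 S1 E1] := comb SS a1 b1 hs.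
have [z2 S2 E2] := comb SS a2 b2 hs.
have [z3 S3 E3] := comb SS a3 b3 hs.
have [z4 S4 E4] := comb SS a4 b4 hs.
exists ((z1, z2), (z3, z4)); first by split; split.
rewrite /Ld /Vd /L4 /V4 /= E1 E2 E3 E4; split.
  apply/rowP => i; rewrite !mxE; ring.
dsimp; ring.
Qed.


Lemma F_expand (L0 L1 : 'rV[R]_n) (V0 V1 s : R) :
  dot ((1 - s) *: L0 + s *: L1) ((1 - s) *: L0 + s *: L1) +
  ((1 - s) * V0 + s * V1 + c) * ((1 - s) * V0 + s * V1 + c)
  - (dot L0 L0 + (V0 + c) * (V0 + c)) =
  2 * s * (dot L0 L1 - dot L0 L0 + (V0 + c) * (V1 - V0)) +
  s ^+ 2 * (dot (L1 - L0) (L1 - L0) + (V1 - V0) ^+ 2).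
Proof. dsimp; rewrite [dot L1 L0]dotC; ring. Qed.

Lemma approx : is_state_space Om u -> 0 < c ->
  (forall p1 p2 p3 p4, pos_cone Om p1 -> pos_cone Om p2 -> pos_cone Om p3 ->
     pos_cone Om p4 -> p1 + p4 = p2 + p3 -> 0 <= V4 p1 p2 p3 p4) ->
  exists g, forall w, Om w -> [/\ -c <= dot g w, -c <= dot a w - dot g w,
     -c <= dot b w - dot g w & -c <= dot g w - dot a w - dot b w + dot u w].
Proof.
move=> SS c0 NC; have [[w0 ow0] _ _ hu] := SS.
have Sin t w : 0 <= t <= 1 -> Om w -> S (t, w) by move=> ht ow; apply/SP.
have S1 w : Om w -> S (1, w) by move=> ow; apply: Sin => //; rewrite lexx ler01.
have S0 w : Om w -> S (0, w) by move=> ow; apply: Sin => //; rewrite lexx ler01.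
pose d0 : X := (((1, w0), (1, w0)), ((0, w0), (0, w0))).
have D0 : D d0 by split; split; [exact: S1|exact: S1|exact: S0|exact: S0].
have cF : {within D, continuous F} by apply: continuous_subspaceT; exact: F_cont.
have [ds Dds Hmin] := compact_EVT_min (ex_intro _ d0 D0) (D_compact SS) cF.
move: Dds; rewrite inE => Dds.
set L0 := Ld ds; set V0 := Vd ds; set h := V0 + c.
have VI d : D d -> dot L0 L0 + h * V0 <= dot L0 (Ld d) + h * Vd d.
  move=> Dd; set L1 := Ld d; set V1 := Vd d.
  suff : 0 <= dot L0 L1 - dot L0 L0 + h * (V1 - V0) by lra.
  apply: (@var_ineq _ (dot (L1 - L0) (L1 - L0) + (V1 - V0) ^+ 2)).
    by rewrite addr_ge0 ?dot_ge0 ?sqr_ge0.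
  move=> s s0 s1.
  have hs : 0 <= s <= 1 by rewrite s1 ltW.
  have [dd Ddd [EL EV]] := D_comb SS Dds Dd hs.
  have := Hmin dd (mem_set Ddd); rewrite /F EL EV -/L0 -/L1 -/V0 -/V1 => HH.
  have := F_expand L0 L1 V0 V1 s; rewrite /h; lra.
have PC x : S x -> pos_cone Om (pt x).
  by move=> /SP [/andP[x0 _] ox]; exists x.1, x.2.
have L4eq p1 p2 p3 p4 : L4 p1 p2 p3 p4 = 0 -> p1 + p4 = p2 + p3.
  move=> H0; have : p1 + p4 = L4 p1 p2 p3 p4 + p2 + p3.
    by rewrite /L4; apply/rowP => i; rewrite !mxE; ring.
  by rewrite H0 add0r.
have hpos : 0 < h.
  rewrite ltNge; apply/negP => hle.
  have := VI d0 D0.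
  have -> : Ld d0 = 0 by rewrite /Ld /L4 /pt /=; apply/rowP => i; rewrite !mxE; ring.
  have Vd0 : 0 <= Vd d0.
    move: D0 => [[A1 A2] [A3 A4]].
    exact: (NC _ _ _ _ (PC _ A1) (PC _ A2) (PC _ A3) (PC _ A4) erefl).
  rewrite dot0r add0r => HV.
  have hV : h * Vd d0 <= 0 by rewrite mulr_le0_ge0.
  have LL := dot_ge0 L0.
  have hV0 : V0 = h - c by rewrite /h; ring.
  rewrite hV0 in HV.
  have hh : h = 0 by nra.
  have LL0 : dot L0 L0 = 0 by nra.
  have L00 := dot_eq0 LL0.
  move: Dds => [[A1 A2] [A3 A4]].
  have := NC _ _ _ _ (PC _ A1) (PC _ A2) (PC _ A3) (PC _ A4) (L4eq _ _ _ _ L00).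
  rewrite -/(Vd ds) -/V0 hV0 hh; lra.
have hV0 : V0 = h - c by rewrite /h; ring.
pose g := h^-1 *: L0.
have key d : D d -> -c <= Vd d + dot g (Ld d).
  move=> Dd; have := VI d Dd; rewrite hV0 => HV.
  have LL := dot_ge0 L0.
  rewrite /g dotZl -(ler_pM2l hpos) mulrDr mulrA mulfV ?gt_eqF // mul1r.
  nra.
exists g => w ow.
have DA t1 t2 t3 t4 : t1 \in [:: 0; 1] -> t2 \in [:: 0; 1] -> t3 \in [:: 0; 1] ->
    t4 \in [:: 0; 1] -> D (((t1, w), (t2, w)), ((t3, w), (t4, w))).
  have St t : t \in [:: 0; 1] -> S (t, w).
    by rewrite !inE => /orP[] /eqP ->; [exact: S0 | exact: S1].
  by move=> *; split; split; apply: St.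
have I0 : (0 : R) \in [:: 0; 1] by rewrite !inE eqxx.
have I1 : (1 : R) \in [:: 0; 1] by rewrite !inE eqxx orbT.
have K1 := key _ (DA _ _ _ _ I1 I0 I0 I0).
have K2 := key _ (DA _ _ _ _ I0 I1 I0 I0).
have K3 := key _ (DA _ _ _ _ I0 I0 I1 I0).
have K4 := key _ (DA _ _ _ _ I0 I0 I0 I1).
move: K1 K2 K3 K4; rewrite /Ld /Vd /L4 /V4 /pt /= !scale1r !scale0r.
dsimp; move=> K1 K2 K3 K4; split; lra.
Qed.

End Sep.

Section Cert.
Variable R : realType.
Ltac dsimp := do 4 rewrite ?hatwD ?hatwN ?hatwZ ?dotDl ?dotNl ?dotDr ?dotNr ?dotZl ?dotZr ?dot0l ?dot0r.

Lemma certificate n (Om : set 'rV[R]_n) u e f l : is_state_space Om u ->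
  effect Om u e -> effect Om u f -> 0 < l -> l <= 1 -> lambda_ef Om u e f < l ->
  exists p1 p2 p3 p4, [/\ pos_cone Om p1 /\ pos_cone Om p2,
    pos_cone Om p3 /\ pos_cone Om p4, p1 + p4 = p2 + p3 &
    V4 u (smear u l e) (smear u l f) p1 p2 p3 p4 < 0].
Proof.
move=> SS he hf l0 l1 lt.
have [//|NE] := pselect (exists p1 p2 p3 p4, [/\ pos_cone Om p1 /\ pos_cone Om p2,
    pos_cone Om p3 /\ pos_cone Om p4, p1 + p4 = p2 + p3 &
    V4 u (smear u l e) (smear u l f) p1 p2 p3 p4 < 0]).
exfalso.
set ef := lambda_ef Om u e f in lt.
have ef1 : ef <= 1 by exact: lam_ef_le1.
have ef2 : 1/2 <= ef by exact: lam_ef_ge.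
pose c := (l - ef) / 8.
have c0 : 0 < c by rewrite /c divr_gt0 //; lra.
have hc : c = (l - ef) / 8 by [].
clearbody c.
have NC : forall p1 p2 p3 p4, pos_cone Om p1 -> pos_cone Om p2 -> pos_cone Om p3 ->
     pos_cone Om p4 -> p1 + p4 = p2 + p3 -> 0 <= V4 u (smear u l e) (smear u l f) p1 p2 p3 p4.
  move=> p1 p2 p3 p4 c1 c2 c3 c4 E; rewrite leNgt; apply/negP => Vlt.
  by apply: NE; exists p1, p2, p3, p4; split.
have [g Hg] := approx (a := smear u l e) (b := smear u l f) SS c0 NC.
have [_ _ _ hu] := SS.
pose s := (1 + 4 * c)^-1.
have s0 : 0 < s by rewrite /s invr_gt0; lra.
have sc : s * (1 + 4 * c) = 1 by rewrite /s mulVf // gt_eqF //; lra.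
clearbody s.
have adm : admS Om u e f (s * l).
  split.
    apply/andP; split; first by rewrite mulr_ge0 // ltW.
    have : s <= 1 by nra.
    nra.
  exists (s *: g + ((1 - s) / 4) *: u) => w ow.
  have [G1 G2 G3 G4] := Hg w ow.
  move: G1 G2 G3 G4; rewrite /smear; dsimp; rewrite hu //.
  move=> G1 G2 G3 G4.
  have P1 : 0 <= s * (dot g w + c) by apply: mulr_ge0; [exact: ltW | lra].
  have P2 : 0 <= s * (l * dot e w + (1 - l) / 2 * 1 - dot g w + c) by apply: mulr_ge0; [exact: ltW | lra].
  have P3 : 0 <= s * (l * dot f w + (1 - l) / 2 * 1 - dot g w + c) by apply: mulr_ge0; [exact: ltW | lra].
  have P4 : 0 <= s * (dot g w - (l * dot e w + (1 - l) / 2 * 1) -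
    (l * dot f w + (1 - l) / 2 * 1) + 1 + c) by apply: mulr_ge0; [exact: ltW | lra].
  have E1 : 1 - s = 4 * (s * c) by rewrite -{1}sc; ring.
  have E2 : (1 - s) / 4 = s * c by rewrite E1; field.
  rewrite E2.
  split; [lra | | | ].
  - move: P2; rewrite ?mulrDr ?mulrBr ?mulrN ?mulrA. lra.
  - move: P3; rewrite ?mulrDr ?mulrBr ?mulrN ?mulrA; lra.
  - move: P4; rewrite ?mulrDr ?mulrBr ?mulrN ?mulrA; lra.
have := ub_le_sup (admS_ub Om u e f) adm; rewrite -/(lambda_ef Om u e f) -/ef.
move=> h; nra.
Qed.


Lemma steer2 n1 n2 (OmA : set 'rV[R]_n1) uA (OmB : set 'rV[R]_n2) uB w al q :
  is_state_space OmA uA -> steering OmA uA OmB uB w -> marginalA w uB = al ->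
  pos_cone OmA q -> pos_cone OmA (al - q) -> dot uA al = 1 ->
  exists2 b, effect OmB uB b & hatw w b = q.
Proof.
move=> SA st mg cq cq' ua.
pose F := fun i : 'I_2 => if i == ord0 then q else al - q.
have h1 := pos_cone_u SA cq; have h2 := pos_cone_u SA cq'.
move: h2; rewrite dotBr ua => h2.
have A1 : forall i, pos_cone OmA (F i) by move=> i; rewrite /F; case: ifP.
have A2 : forall i, 0 <= dot uA (F i) <= 1.
  by move=> i; rewrite /F; case: ifP => _; apply/andP; split; rewrite ?dotBr ?ua; lra.
have A3 : \sum_(i < 2) F i = marginalA w uB.
  by rewrite big_ord_recl big_ord1 /F /= mg addrC subrK.
have [e [he _ hh]] := st 2%N F A1 A2 A3.
by exists (e ord0) => //; rewrite -hh.
Qed.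


Lemma bell_uu n1 n2 (uA : 'rV[R]_n1) (uB : 'rV[R]_n2) w :
  pair2 w uA uB = 1 -> bell uA uB w uA uA uB uB = 2.
Proof.
move=> h; rewrite /bell /dich /= !subrr !subr0 h; lra.
Qed.

Lemma lower n1 n2 (OmA : set 'rV[R]_n1) uA (OmB : set 'rV[R]_n2) uB K :
  is_state_space OmA uA -> is_state_space OmB uB ->
  uniform_universal_steering_with OmA uA OmB uB K ->
  forall eps : R, 0 < eps ->
     exists w a1 a2 b1 b2,
     [/\ composite_states K uA uB w,
         effect OmA uA a1 /\ effect OmA uA a2,
         effect OmB uB b1 /\ effect OmB uB b2 &
         2 / lambda_opt OmA uA - eps < bell uA uB w a1 a2 b1 b2].
Proof.
move=> SA SB US eps eps0.
have SA' := SA; case: SA' => [[w0 ow0] _ _ huA].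
have lo := lam_opt_ge SA.
have lo1 : lambda_opt OmA uA <= 1.
  apply: le_trans (lam_opt_le SA (effect0 SA) (effect0 SA)) _.
  exact: lam_ef_le1 (effect0 SA) (effect0 SA).
set lop := lambda_opt OmA uA in lo lo1 *.
set be := 2 / lop.
have be2 : 2 <= be by rewrite /be ler_pdivlMr; lra.
have lopbe : lop * be = 2 by rewrite /be mulrCA mulfV ?mulr1 // gt_eqF //; lra.
have hbe : be = 2 / lop by [].
clearbody be.
have [small|big] := ltrP (be - eps) 2.
  have [w [cw _]] := US w0 ow0.
  exists w, uA, uA, uB, uB; split => //; try split; try exact: effectu.
  by rewrite bell_uu //; case: cw.
pose l := 2 / (be - eps / 2).
have d0 : 2 < be - eps / 2 by lra.
have hl : l = 2 / (be - eps / 2) by [].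
clearbody l.
have l0 : 0 < l by rewrite hl divr_gt0 //; lra.
have l1 : l <= 1 by rewrite hl ler_pdivrMr; lra.
have lbe : 2 / l = be - eps / 2 by rewrite hl invf_div mulrCA divff ?mulr1.
have llo : lop < l.
  rewrite hl ltr_pdivlMr; last lra.
  nra.
have [y [e [f [he hf ->]]] ylt] : exists2 y, optS OmA uA y & y < l.
  apply: inf_lt; last exact: llo.
  by exists (lambda_ef OmA uA 0 0), 0, 0; split => //; exact: effect0.
have [p1 [p2 [p3 [p4 [[c1 c2] [c3 c4] E V]]]]] := certificate SA he hf l0 l1 ylt.
have cr := pos_coneD SA c1 c4.
case: (cr) => t [al [t0 oal] Er].
have ht : dot uA (p1 + p4) = t by rewrite Er dotZr huA // mulr1.
have tpos : 0 < t.
  rewrite lt_def t0 andbT; apply/negP => /eqP tz.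
  have u1 := pos_cone_u SA c1; have u2 := pos_cone_u SA c2.
  have u3 := pos_cone_u SA c3; have u4 := pos_cone_u SA c4.
  have h14 := ht; rewrite dotDr tz in h14.
  have h23 := ht; rewrite E dotDr tz in h23.
  have z1 := pos_cone_u0 SA c1 (ltac:(lra) : dot uA p1 = 0).
  have z2 := pos_cone_u0 SA c2 (ltac:(lra) : dot uA p2 = 0).
  have z3 := pos_cone_u0 SA c3 (ltac:(lra) : dot uA p3 = 0).
  have z4 := pos_cone_u0 SA c4 (ltac:(lra) : dot uA p4 = 0).
  by move: V; rewrite z1 z2 z3 z4 /V4 !dot0r; lra.
pose q1 := t^-1 *: p4; pose q2 := t^-1 *: p3.
have tK (v : 'rV[R]_n1) : t *: (t^-1 *: v) = v by rewrite scalerA mulfV ?gt_eqF // scale1r.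
have Ep4 : p4 = t *: q1 by rewrite tK.
have Ep3 : p3 = t *: q2 by rewrite tK.
have Ep1 : p1 = t *: (al - q1) by rewrite scalerBr tK -Er addrK.
have Ep2 : p2 = t *: (al - q2) by rewrite scalerBr tK -Er E addrK.
have ual : dot uA al = 1 by rewrite huA.
have [w [cw [mg st]]] := US al oal.
have ti0 : 0 <= t^-1 by rewrite invr_ge0.
have Eq1 : al - q1 = t^-1 *: p1 by rewrite Ep1 scalerA mulVf ?gt_eqF // scale1r.
have Eq2 : al - q2 = t^-1 *: p2 by rewrite Ep2 scalerA mulVf ?gt_eqF // scale1r.
have [b1 eb1 hb1] := steer2 SA st mg (pos_coneZ ti0 c4) (ltac:(rewrite Eq1; exact: pos_coneZ ti0 c1)) ual.
have [b2 eb2 hb2] := steer2 SA st mg (pos_coneZ ti0 c3) (ltac:(rewrite Eq2; exact: pos_coneZ ti0 c2)) ual.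
exists w, e, f, b1, b2; split => //.
set W := V4 uA (smear uA l e) (smear uA l f) (al - q1) (al - q2) q2 q1.
have HV : V4 uA (smear uA l e) (smear uA l f) p1 p2 p3 p4 = t * W.
  by rewrite /W Ep1 Ep2 Ep3 Ep4 /V4; do 6 rewrite ?dotDr ?dotNr ?dotZr; ring.
have W0 : W < 0 by move: V; rewrite HV; rewrite pmulr_rlt0.
have mg' : hatw w uB = al by exact: mg.
have Hb : l * bell uA uB w e f b1 b2 = 2 - 4 * W.
  rewrite /W /bell /dich /= !pair2_dot /V4 /smear.
  do 8 rewrite ?hatwD ?hatwN ?hatwZ ?dotDl ?dotNl ?dotDr ?dotNr ?dotZl ?dotZr.
  rewrite hb1 hb2 mg' ual.
  do 8 rewrite ?dotDl ?dotNl ?dotDr ?dotNr ?dotZl ?dotZr.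
  by field; rewrite gt_eqF.
have : 2 / l < bell uA uB w e f b1 b2.
  rewrite ltr_pdivrMr // mulrC Hb; lra.
rewrite lbe; lra.
Qed.

End Cert.

Unset Implicit Arguments.

Theorem theorem1 (R : realType) (nA nB : nat)
  (OmA : set 'rV[R]_nA) (uA : 'rV[R]_nA)
  (OmB : set 'rV[R]_nB) (uB : 'rV[R]_nB)
  (K : set 'M[R]_(nA, nB)) :
  is_state_space OmA uA -> is_state_space OmB uB ->
  composite_cone OmA OmB K ->
  uniform_universal_steering_with OmA uA OmB uB K ->
  (forall w a1 a2 b1 b2,
     composite_states K uA uB w ->
     effect OmA uA a1 -> effect OmA uA a2 ->
     effect OmB uB b1 -> effect OmB uB b2 ->
     bell uA uB w a1 a2 b1 b2 <= 2 / lambda_opt OmA uA) /\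
  (forall eps : R, 0 < eps ->
     exists w a1 a2 b1 b2,
     [/\ composite_states K uA uB w,
         effect OmA uA a1 /\ effect OmA uA a2,
         effect OmB uB b1 /\ effect OmB uB b2 &
         2 / lambda_opt OmA uA - eps < bell uA uB w a1 a2 b1 b2]).

Proof.
move=> SA SB KC US; split.
  by move=> w a1 a2 b1 b2 cw h1 h2 h3 h4; exact: upper SA KC cw h1 h2 h3 h4.
exact: lower SA SB US.
Qed.
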